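(* Let $\kappa$ be an uncountable cardinal and let $X$, $Y$ be non-trivial Banach spaces. If $X$ is $\mathrm{ASQ}_{<\kappa}$ (respectively, $\mathrm{SQ}_{<\kappa}$), then the injective tensor product $X\widehat{\otimes}_\varepsilon Y$ is $\mathrm{ASQ}_{<\kappa}$ (respectively, $\mathrm{SQ}_{<\kappa}$).
   Context: $X\widehat{\otimes}_\varepsilon Y$ is the closure, in the operator norm, of the finite-rank operators from $Y^*$ to $X$. A Banach space $Z$ is $\mathrm{ASQ}_{<\kappa}$ if for every set $A\subset S_Z$ with $|A|<\kappa$ and every $\varepsilon>0$ there exists $y\in S_Z$ with $\|x\pm y\|\le 1+\varepsilon$ for all $x\in A$; $Z$ is $\mathrm{SQ}_{<\kappa}$ if for every such $A$ there exists $y\in S_Z$ with $\|x\pm y\|\le 1$ for all $x\in A$. *)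

(* Defs.v *)
From HB Require Import structures.
From mathcomp Require Import all_boot all_order all_algebra.
From mathcomp Require Import all_classical all_reals all_analysis.
Set Implicit Arguments. Unset Strict Implicit. Unset Printing Implicit Defensive.
Import Order.TTheory GRing.Theory Num.Theory.
Import numFieldNormedType.Exports.
Local Open Scope classical_set_scope.
Local Open Scope ring_scope.

(* |A| < kappa, where the cardinal kappa is represented by a type K *)
Definition card_lt_type {T : Type} (A : set T) (K : Type) :=
  (A #<= [set: K])%card /\ ~ ([set: K] #<= A)%card.

Section Defs.
Variable R : realType.

Definition dual (Y : normedModType R) : set (Y -> R) :=
  [set phi | (forall (a : R) (u v : Y), phi (a *: u + v) = a * phi u + phi v)
          /\ exists M : R, forall y : Y, `|phi y| <= M * `|y| ].

Definition dnorm (Y : normedModType R) (phi : Y -> R) : R :=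
  sup [set `|phi y| | y in [set y : Y | `|y| <= 1]].

Definition opnorm (X Y : normedModType R) (T : (Y -> R) -> X) : R :=
  sup [set `|T phi| | phi in [set phi | dual phi /\ dnorm phi <= 1]].

Definition bdd_op (X Y : normedModType R) : set ((Y -> R) -> X) :=
  [set T | (forall phi, ~ dual phi -> T phi = 0)
        /\ (forall (a : R) phi psi, dual phi -> dual psi ->
              T (fun y => a * phi y + psi y) = a *: T phi + T psi)
        /\ exists M : R, forall phi, dual phi -> `|T phi| <= M * dnorm phi].

(* X \hat\otimes_eps Y : operator-norm closure of the elementary tensors
   sum_i y_i (x) x_i, acting as phi |-> sum_i phi(y_i) x_i *)
Definition inj_tensor (X Y : normedModType R) : set ((Y -> R) -> X) :=
  [set T | bdd_op T /\
     forall e : R, 0 < e -> exists (n : nat) (x : 'I_n -> X) (y : 'I_n -> Y),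
        opnorm (fun phi => T phi - \sum_(i < n) phi (y i) *: x i) < e].

(* ASQ_{<kappa} and SQ_{<kappa} for a (sub)space Z of V with norm N *)
Definition ASQ_lt (V : zmodType) (Z : set V) (N : V -> R) (K : Type) :=
  forall A : set V, A `<=` Z -> (forall x, A x -> N x = 1) -> card_lt_type A K ->
  forall e : R, 0 < e -> exists y, Z y /\ N y = 1 /\
     forall x, A x -> N (x + y) <= 1 + e /\ N (x - y) <= 1 + e.

Definition SQ_lt (V : zmodType) (Z : set V) (N : V -> R) (K : Type) :=
  forall A : set V, A `<=` Z -> (forall x, A x -> N x = 1) -> card_lt_type A K ->
  exists y, Z y /\ N y = 1 /\
     forall x, A x -> N (x + y) <= 1 /\ N (x - y) <= 1.

End Defs.

(* Main.v *)
Require Import Defs.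
From HB Require Import structures.
From mathcomp Require Import all_boot all_order all_algebra.
From mathcomp Require Import all_classical all_reals all_analysis.
Import Order.TTheory GRing.Theory Num.Theory.
Import numFieldNormedType.Exports.
Local Open Scope classical_set_scope.
Local Open Scope ring_scope.
From mathcomp Require Import ring lra.
From HB Require Import structures.
From mathcomp Require Import all_boot all_order all_algebra.
From mathcomp Require Import all_classical all_reals all_analysis.
Import Order.TTheory GRing.Theory Num.Theory.
Import numFieldNormedType.Exports.
Local Open Scope classical_set_scope.
Local Open Scope ring_scope.
Lemma cle_of_fun T U (A : set T) (B : set U) (f : T -> U) :
  (forall a, A a -> B (f a)) -> {in A &, injective f} -> (A #<= B)%card.
Proof.
move=> hf hi; have : $|{injfun A >-> B}| by apply/injfunPex; exists f.
by case=> g; exact: inj_card_le g.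
Qed.

Lemma countable_inj {T} (A : set T) : countable A ->
  exists f : T -> nat, {in A &, injective f}.
Proof. by move/pcard_injP. Qed.

Lemma nat_inj_of_infinite {T} (A : set T) : infinite_set A ->
  exists h : nat -> T, (forall n, A (h n)) /\ injective h.
Proof.
move: A; elim/Ppointed: T => T A.
  by move=> Ainf; exfalso; apply: Ainf; rewrite (empty_eq0 A); exact: finite_set0.
move=> /infiniteP /pcard_leP [f].
exists f; split; first by move=> n; have := @funS _ _ _ _ f n; apply.
by move=> m n fmn; have := @inj _ _ _ f m n; apply => //; rewrite inE.
Qed.

Lemma pick_inj (C : countType) (x y : C) : pickle x = pickle y -> x = y.
Proof. exact: (pcan_inj pickleK). Qed.
Section CardL.
Variable T : Type.
Variable A : set T.

Definition Pg (G : set ((T * nat) * T)) : Prop :=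
 [/\ (forall a n b, G ((a,n),b) -> A a),
     (forall a n b m, G ((a,n),b) -> exists c, G ((a,m),c)),
     (forall p b, G (p,b) -> exists c, G ((b,0%N),c)),
     (forall p b c, G (p,b) -> G (p,c) -> b = c) &
     (forall p q b, G (p,b) -> G (q,b) -> p = q)].

Lemma Pg_chain (F : set (set ((T * nat) * T))) :
  F `<=` Pg -> total_on F subset -> Pg (\bigcup_(X in F) X).
Proof.
move=> FP tot; split.
- by move=> a n b [X FX Xab]; have [h _ _ _ _] := FP X FX; exact: h Xab.
- move=> a n b m [X FX Xab]; have [_ h _ _ _] := FP X FX.
  by have [c Xc] := h _ _ _ m Xab; exists c; exists X.
- move=> p b [X FX Xab]; have [_ _ h _ _] := FP X FX.
  by have [c Xc] := h _ _ Xab; exists c; exists X.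
- move=> p b c [X FX Xb] [Z FZ Zc].
  have [XZ|ZX] := tot _ _ FX FZ.
    by have [_ _ _ h _] := FP Z FZ; apply: (h _ _ _ _ Zc); apply: XZ.
  by have [_ _ _ h _] := FP X FX; apply: (h _ _ _ Xb); apply: ZX.
- move=> p q b [X FX Xb] [Z FZ Zc].
  have [XZ|ZX] := tot _ _ FX FZ.
    by have [_ _ _ _ h] := FP Z FZ; apply: (h _ _ _ _ Zc); apply: XZ.
  by have [_ _ _ _ h] := FP X FX; apply: (h _ _ _ Xb); apply: ZX.
Qed.

Lemma card_prod_nat : infinite_set A -> (A `*` [set: nat] #<= A)%card.
Proof.
move=> Ainf.
have [G [PG Gmax]] := Zorn_bigcup Pg_chain.
have [GA Gdom Grng Gfun Ginj] := PG.
pose D := [set a | exists n b, G ((a,n),b)].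
have DA : D `<=` A by move=> a [n [b Gb]]; exact: GA Gb.
have Ffin : finite_set (A `\` D).
  apply: contrapT => Finf.
  have [h [hF hinj]] := nat_inj_of_infinite _ Finf.
  pose N := [set z : (T * nat) * T | exists i n, z = ((h i, n), h (pickle (i, n)))].
  have hD i : ~ D (h i) by have [] := hF i.
  have GN : Pg (G `|` N).
    split.
    - move=> a n b [/GA//|[i [m [-> _ _]]]]; by have [] := hF i.
    - move=> a n b m [Gb|[i [k [-> _ _]]]].
        by have [c Gc] := Gdom _ _ _ m Gb; exists c; left.
      by exists (h (pickle (i, m))); right; exists i, m.
    - move=> p b [Gb|[i [k [_ ->]]]].
        by have [c Gc] := Grng _ _ Gb; exists c; left.
      by exists (h (pickle (pickle (i, k), 0%N))); right; exists (pickle (i,k)), 0%N.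
    - move=> [a n] b c [Gb|[i [k Eb]]] [Gc|[j [l Ec]]].
      + exact: Gfun Gb Gc.
      + by case: Ec => Ea _ _; exfalso; apply: (hD j); rewrite -Ea; exists n, b.
      + by case: Eb => Ea _ _; exfalso; apply: (hD i); rewrite -Ea; exists n, c.
      + move: Ec; case: Eb => -> -> ->; case=> /hinj -> -> -> //.
    - move=> p q b [Gb|[i [k Eb]]] [Gc|[j [l Ec]]].
      + exact: Ginj Gb Gc.
      + case: Ec => _ Eb'; have [c Gc'] := Grng _ _ Gb.
        by exfalso; apply: (hD (pickle (j, l))); rewrite -Eb'; exists 0%N, c.
      + case: Eb => _ Eb'; have [c Gc'] := Grng _ _ Gc.
        by exfalso; apply: (hD (pickle (i, k))); rewrite -Eb'; exists 0%N, c.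
      + move: Ec; case: Eb => -> ->; case=> -> /hinj /pick_inj [-> ->] //.
  apply: (Gmax (G `|` N)) => //; split; first exact: subsetUl.
  move=> /(_ ((h 0%N, 0%N), h (pickle (0%N, 0%N)))) H.
  have : G ((h 0%N, 0%N), h (pickle (0%N, 0%N))).
    by apply: H; right; exists 0%N, 0%N.
  by move=> Gh; apply: (hD 0%N); exists 0%N, (h (pickle (0%N, 0%N))).
have Dinf : infinite_set D.
  move=> Dfin; apply: Ainf.
  have -> : A = D `|` (A `\` D).
    by apply/seteqP; split=> [a Aa|a [/DA//|[]//]]; have [Da|nDa] := pselect (D a); [left|right].
  by rewrite finite_setU.
have [d0 Dd0] := infinite_setN0 Dinf.
have [idx idxI] := countable_inj _ (finite_set_countable Ffin).
have /choice [g Pg'] : forall p : T * nat, exists b, D p.1 -> G (p, b).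
  move=> [a n]; have [[m [b Gb]]|nD] := pselect (D a).
    by have [c Gc] := Gdom _ _ _ n Gb; exists c.
  by exists a.
have gD p : D p.1 -> D (g p).
  by move=> /Pg' Gp; have [c Gc] := Grng _ _ Gp; exists 0%N, c.
have ginj p q : D p.1 -> D q.1 -> g p = g q -> p = q.
  by move=> /Pg' Gp /Pg' Gq E; rewrite E in Gp; exact: Ginj Gp Gq.
pose f (p : T * nat) : T :=
  if `[< D p.1 >] then g (p.1, pickle (false, (p.2, 0%N)))
  else g (d0, pickle (true, (idx p.1, p.2))).
apply: (@cle_of_fun _ _ _ _ f).
  move=> [a n] [Aa _]; rewrite /f /=; apply: DA.
  by case: ifPn => /asboolP Da; apply: gD.
move=> [a n] [b m]; rewrite !inE => -[Aa _] [Ab _]; rewrite /f /=.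
case: ifPn => /asboolP Da; case: ifPn => /asboolP Db => E.
- have /pair_equal_spec [-> /pick_inj] := ginj (_,_) (_,_) Da Db E.
  by case=> ->.
- by have /pair_equal_spec [_ /pick_inj] := ginj (_,_) (_,_) Da Dd0 E.
- by have /pair_equal_spec [_ /pick_inj] := ginj (_,_) (_,_) Dd0 Db E.
- have /pair_equal_spec [_ /pick_inj [/idxI]] := ginj (_,_) (_,_) Dd0 Dd0 E.
  by rewrite !inE => -> // ->.
Qed.
End CardL.

Lemma card_lt_prod {T K : Type} (A : set T) :
  card_lt_type A K -> ~ countable [set: K] ->
  card_lt_type (A `*` [set: nat]) K.
Proof.
move=> [AK KA] Kunc.
have Kinf : infinite_set [set: K] by move=> /finite_set_countable.
have [Afin|Ainf] := pselect (finite_set A).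
  have cA : countable (A `*` [set: nat]).
    by apply: countableX; [exact: finite_set_countable|exact: countableP].
  split; first by apply: card_le_trans cA _; apply/infiniteP.
  by move=> KAN; apply: Kunc; apply: card_le_trans KAN cA.
have L := @card_prod_nat _ A Ainf.
split; first exact: card_le_trans L AK.
by move=> KAN; apply: KA; apply: card_le_trans KAN L.
Qed.

Lemma card_lt_le {T U K : Type} (A : set T) (B : set U) :
  (B #<= A)%card -> card_lt_type A K -> card_lt_type B K.
Proof.
move=> BA [AK KA]; split; first exact: card_le_trans BA AK.
by move=> KB; apply: KA; apply: card_le_trans KB BA.
Qed.
Section HB.
Variable R : realType.
Variable Y : normedModType R.
Variable y0 : Y.

Definition Ph (G : set (Y * R)) : Prop :=
 [/\ (forall u a b, G (u,a) -> G (u,b) -> a = b),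
     (forall l u a v b, G (u,a) -> G (v,b) -> G (l *: u + v, l * a + b)),
     (forall u a, G (u,a) -> a <= `|u|) &
     (G !=set0 -> G (y0, `|y0|))].

Lemma Ph_chain (F : set (set (Y * R))) :
  F `<=` Ph -> total_on F subset -> Ph (\bigcup_(X in F) X).
Proof.
move=> FP tot; split.
- move=> u a b [X FX Xa] [Z FZ Zb].
  have [XZ|ZX] := tot _ _ FX FZ.
    by have [h _ _ _] := FP Z FZ; apply: (h _ _ _ _ Zb); apply: XZ.
  by have [h _ _ _] := FP X FX; apply: (h _ _ _ Xa); apply: ZX.
- move=> l u a v b [X FX Xa] [Z FZ Zb].
  have [XZ|ZX] := tot _ _ FX FZ.
    have [_ h _ _] := FP Z FZ; exists Z => //; apply: h Zb; exact: XZ.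
  have [_ h _ _] := FP X FX; exists X => //; apply: h Xa _; exact: ZX.
- by move=> u a [X FX Xa]; have [_ _ h _] := FP X FX; exact: h.
- move=> [p [X FX Xp]]; have [_ _ _ h] := FP X FX.
  by exists X => //; apply: h; exists p.
Qed.

Lemma hahn_banach : exists phi : Y -> R,
  (forall (a : R) u v, phi (a *: u + v) = a * phi u + phi v) /\
  (forall y, phi y <= `|y|) /\ phi y0 = `|y0|.
Proof.
have [G [PG Gmax]] := Zorn_bigcup Ph_chain.
have [Gfun Glin Gdom Ginit] := PG.
pose G0 := [set p : Y * R | exists t, p = (t *: y0, t * `|y0|)].
have PG0 : Ph G0.
  split.
  - move=> u a b [t [-> ->]] [s [E ->]].
    have [->|y0n] := eqVneq y0 0; first by rewrite normr0 !mulr0.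
    have : (t - s) *: y0 == 0 by rewrite scalerBl E subrr.
    by rewrite scaler_eq0 (negbTE y0n) orbF subr_eq0 => /eqP ->.
  - move=> l u a v b [t [-> ->]] [s [-> ->]]; exists (l * t + s).
    by rewrite scalerA scalerDl mulrA mulrDl.
  - move=> u a [t [-> ->]]; rewrite normrZ.
    by apply: ler_wpM2r; [exact: normr_ge0|exact: ler_norm].
  - by move=> _; exists 1; rewrite scale1r mul1r.
have Gne : G !=set0.
  apply: contrapT => Gem; apply: (Gmax G0) => //; split.
    by move=> p Gp; exfalso; apply: Gem; exists p.
  move=> /(_ (y0, `|y0|)) H; apply: Gem; exists (y0, `|y0|); apply: H.
  by exists 1; rewrite scale1r mul1r.
have Gy0 := Ginit Gne.
have G00 : G (0, 0).
  have := Glin (-1) _ _ _ _ Gy0 Gy0.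
  by rewrite scaleN1r addNr mulN1r addNr.
have Gsc l u a : G (u,a) -> G (l *: u, l * a).
  by move=> Gu; have := Glin l _ _ _ _ Gu G00; rewrite addr0 addr0.
have Gtot : forall z, exists a, G (z, a).
  move=> z; apply: contrapT => zdom.
  have key u a v b : G (u,a) -> G (v,b) -> a - `|u - z| <= `|v + z| - b.
    move=> Gu Gv; have := Gdom _ _ (Glin 1 _ _ _ _ Gu Gv).
    rewrite scale1r mul1r => H.
    have : `|u + v| <= `|u - z| + `|v + z|.
      have -> : u + v = (u - z) + (v + z) by rewrite addrACA addNr addr0.
      exact: ler_normD.
    lra.
  pose L := [set r | exists u a, G (u,a) /\ r = a - `|u - z|].
  have Lne : L !=set0 by exists (0 - `|0 - z|); exists 0, 0.
  have hasL : has_sup L.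
    split => //; exists (`|0 + z| - 0) => r [u [a [Gu ->]]]; exact: key.
  pose c := sup L.
  have cup u a : G (u,a) -> a - `|u - z| <= c.
    by move=> Gu; apply: sup_upper_bound => //; exists u, a.
  have clow v b : G (v,b) -> c <= `|v + z| - b.
    by move=> Gv; apply: ge_sup => // r [u [a [Gu ->]]]; exact: key.
  pose G' := [set p : Y * R | exists u a t, G (u,a) /\ p = (u + t *: z, a + t * c)].
  have PG' : Ph G'.
    split.
    - move=> w a b [u [a1 [t [Gu E1]]]] [u' [a2 [t' [Gu' E2]]]].
      case: E1 => Ew ->; case: E2 => Ew' ->.
      have [tt'|tt'] := eqVneq t t'.
        rewrite -tt' in Ew' *; rewrite Ew in Ew'.
        by move/addIr: Ew' => uu; rewrite uu in Gu; rewrite (Gfun _ _ _ Gu Gu').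
      exfalso; apply: zdom.
      have E : (t - t') *: z = u' - u.
        rewrite scalerBl; have : u + t *: z = u' + t' *: z by rewrite -Ew -Ew'.
        move=> E; rewrite -[u'](addrK (t' *: z)) -E.
        by rewrite addrAC [u + _]addrC addrK.
      exists ((t - t')^-1 * (- a1 + a2)).
      have -> : z = (t - t')^-1 *: (u' - u).
        by rewrite -E scalerA mulVf ?scale1r // subr_eq0.
      apply: Gsc; have := Glin (-1) _ _ _ _ Gu Gu'.
      by rewrite scaleN1r mulN1r addrC.
    - move=> l w a v b [u [a1 [t [Gu [-> ->]]]]] [u' [a2 [t' [Gu' [-> ->]]]]].
      exists (l *: u + u'), (l * a1 + a2), (l * t + t'); split; first exact: Glin.
      congr (_, _); last by ring.
      rewrite scalerDr scalerA scalerDl addrACA //.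
    - move=> w a [u [a1 [t [Gu [-> ->]]]]].
      have [tneg|tpos|->] := ltgtP t 0; last first.
      + by rewrite scale0r mul0r !addr0; exact: Gdom.
      + have := clow _ _ (Gsc t^-1 _ _ Gu).
        have -> : `|t^-1 *: u + z| = t^-1 * `|u + t *: z|.
          have -> : t^-1 *: u + z = t^-1 *: (u + t *: z).
            by rewrite scalerDr scalerA mulVf ?gt_eqF // scale1r.
          by rewrite normrZ gtr0_norm // invr_gt0.
        have h1 : t * t^-1 = 1 by rewrite mulfV ?gt_eqF.
        move: (normr_ge0 (u + t *: z)) => h2.
        set N := `|u + t *: z|; set ti := t^-1 => H.
        have : t * c <= t * (ti * N - ti * a1) by rewrite ler_pM2l.
        rewrite mulrBr !mulrA h1 !mul1r; lra.
      + set s := - t; have spos : 0 < s by rewrite /s oppr_gt0.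
        have := cup _ _ (Gsc s^-1 _ _ Gu).
        have -> : `|s^-1 *: u - z| = s^-1 * `|u + t *: z|.
          have -> : u + t *: z = s *: (s^-1 *: u - z).
            by rewrite scalerBr scalerA mulfV ?gt_eqF // scale1r /s scaleNr opprK.
          by rewrite normrZ mulrA gtr0_norm // mulVf ?gt_eqF // mul1r.
        have h1 : s * s^-1 = 1 by rewrite mulfV ?gt_eqF.
        set N := `|u + t *: z|; set si := s^-1 => H.
        have : s * (si * a1 - si * N) <= s * c by rewrite ler_pM2l.
        rewrite mulrBr !mulrA h1 !mul1r /s; lra.
    - move=> _; exists y0, `|y0|, 0; split => //.
      by rewrite scale0r mul0r !addr0.
  apply: (Gmax G') => //; split.
    move=> [u a] Gu; exists u, a, 0; split => //.
    by rewrite scale0r mul0r !addr0.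
  move=> /(_ (z, c)) H; apply: zdom; exists c; apply: H.
  by exists 0, 0, 1; split => //; rewrite scale1r mul1r !add0r.
have [phi Hphi] := choice Gtot.
exists phi; split; [|split].
- move=> a u v; apply: (Gfun (a *: u + v)); first exact: Hphi.
  exact: Glin.
- by move=> y; exact: Gdom.
- exact: Gfun (Hphi y0) Gy0.
Qed.
End HB.
Arguments hahn_banach {R Y}.
Section Basic.
Variable R : realType.
Variables X Y : normedModType R.

Implicit Types phi psi : Y -> R.
Definition Dn (phi : Y -> R) := @dual R Y phi /\ @dnorm R Y phi <= 1.

Lemma dual_0 {phi} : dual phi -> phi 0 = 0.
Proof.
move=> [lin _]; have := lin 1 0 0; rewrite scale1r addr0 mul1r => E.
by apply: (@addrI _ (phi 0)); rewrite addr0 -E.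
Qed.

Lemma dual_scale {phi} : dual phi -> forall k y, phi (k *: y) = k * phi y.
Proof.
move=> Dphi k y; have [lin _] := Dphi; have := lin k y 0.
by rewrite addr0 dual_0 // addr0.
Qed.

Lemma dnorm_has {phi} : dual phi ->
  has_ubound [set `|phi y| | y in [set y : Y | `|y| <= 1]].
Proof.
move=> [_ [M HM]]; exists `|M| => _ [y /= y1 <-].
apply: le_trans (HM y) _; apply: le_trans (ler_wpM2r (normr_ge0 y) (ler_norm M)) _.
by rewrite ler_piMr.
Qed.

Lemma dnorm_ub {phi} : dual phi -> forall y : Y, `|y| <= 1 -> `|phi y| <= dnorm phi.
Proof.
by move=> Dphi y y1; rewrite /dnorm; apply: (ub_le_sup (dnorm_has Dphi)); exists y.
Qed.

Lemma dnorm_ge0 {phi} : dual phi -> 0 <= dnorm phi.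
Proof.
move=> Dphi; have := dnorm_ub Dphi 0; rewrite normr0 dual_0 // normr0.
by apply.
Qed.

Lemma dual_bound {phi} : dual phi -> forall y, `|phi y| <= dnorm phi * `|y|.
Proof.
move=> Dphi y; have [->|yn] := eqVneq y 0.
  by rewrite dual_0 // !normr0 mulr0.
have ny : 0 < `|y| by rewrite normr_gt0.
have := dnorm_ub Dphi (`|y|^-1 *: y).
rewrite normrZ normfV normr_id mulVf ?gt_eqF // lexx => /(_ isT).
rewrite dual_scale // normrM normfV normr_id.
by rewrite ler_pdivrMl // mulrC.
Qed.

Lemma dual_zero : dual (fun _ : Y => (0 : R)).
Proof. by split; [move=> *; rewrite mulr0 addr0|exists 0 => y; rewrite normr0 mul0r]. Qed.

Lemma Dn_zero : Dn (fun _ : Y => (0 : R)).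
Proof.
split; first exact: dual_zero.
by apply: ge_sup; [exists 0, 0; rewrite /= ?normr0 ?ler01|move=> _ [y _ <-]; rewrite normr0 ler01].
Qed.

Lemma dual_comb (a : R) {phi psi} : dual phi -> dual psi ->
  dual (fun y => a * phi y + psi y).
Proof.
move=> Dphi Dpsi; split.
  move=> b u v; have [l1 _] := Dphi; have [l2 _] := Dpsi.
  rewrite l1 l2; ring.
exists (`|a| * dnorm phi + dnorm psi) => y.
apply: le_trans (ler_normD _ _) _; rewrite normrM mulrDl -mulrA.
apply: lerD; last exact: dual_bound.
by apply: ler_wpM2l => //; exact: dual_bound.
Qed.

Lemma opnorm_ub (T : (Y -> R) -> X) (B : R) :
  (forall phi, Dn phi -> `|T phi| <= B) ->
  forall phi, Dn phi -> `|T phi| <= opnorm T.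
Proof.
move=> HB phi Dphi; have hub : has_ubound [set `|T psi| | psi in [set psi | dual psi /\ dnorm psi <= 1]].
  by exists B => _ [psi Dpsi <-]; exact: HB.
by rewrite /opnorm; apply: (ub_le_sup hub); exists phi.
Qed.

Lemma opnorm_le (T : (Y -> R) -> X) (B : R) :
  (forall phi, Dn phi -> `|T phi| <= B) -> opnorm T <= B.
Proof.
move=> HB; apply: ge_sup; first by exists `|T (fun=> 0)|, (fun=> 0); [exact: Dn_zero|].
by move=> _ [psi Dpsi <-]; exact: HB.
Qed.

Lemma bdd_bound (T : (Y -> R) -> X) : bdd_op T ->
  exists B, forall phi, Dn phi -> `|T phi| <= B.
Proof.
move=> [_ [_ [M HM]]]; exists `|M| => phi [Dphi d1].
apply: le_trans (HM _ Dphi) _.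
apply: le_trans (ler_wpM2r (dnorm_ge0 Dphi) (ler_norm M)) _.
by rewrite ler_piMr.
Qed.

End Basic.
Arguments Dn {R Y}.
Arguments dual_0 {R Y phi}.
Arguments dual_scale {R Y phi}.
Arguments dnorm_has {R Y phi}.
Arguments dnorm_ub {R Y phi}.
Arguments dnorm_ge0 {R Y phi}.
Arguments dual_bound {R Y phi}.
Arguments dual_zero {R Y}.
Arguments Dn_zero {R Y}.
Arguments dual_comb {R Y} a {phi psi}.
Arguments opnorm_ub {R X Y} T B.
Arguments opnorm_le {R X Y} T B.
Arguments bdd_bound {R X Y T}.

Lemma comb_id_gen (R : ringType) (V : lmodType R) (b x : V) (al be : R) :
  al *: (b + x) + be *: (- (b - x)) = (al - be) *: b + (al + be) *: x.
Proof.
rewrite opprB !scalerDr scalerN scalerBl scalerDl.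
by rewrite (addrC (be *: x)) addrACA.
Qed.

Section Conv.
Variable R : realType.
Variable X : normedModType R.

Lemma conv_le (p q : X) (c l : R) : `|p| <= c -> `|q| <= c -> 0 <= l -> l <= 1 ->
  `|l *: p + (1 - l) *: q| <= c.
Proof.
move=> hp hq l0 l1; apply: le_trans (ler_normD _ _) _.
rewrite !normrZ (ger0_norm l0) ger0_norm ?subr_ge0 //.
have h1 : l * `|p| <= l * c by rewrite ler_wpM2l.
have h2 : (1 - l) * `|q| <= (1 - l) * c by rewrite ler_wpM2l // subr_ge0.
lra.
Qed.

Lemma comb_id (b x : X) (al be : R) :
  al *: (b + x) + be *: (- (b - x)) = (al - be) *: b + (al + be) *: x.
Proof. exact: comb_id_gen. Qed.

Lemma L1a (b x : X) (c s : R) : `|b + x| <= c -> `|b - x| <= c -> `|s| <= 1 ->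
  `|s *: b + x| <= c.
Proof.
move=> h1 h2 hs; pose l := (1 + s) / 2.
have -> : s *: b + x = l *: (b + x) + (1 - l) *: (- (b - x)).
  have e1 : l - (1 - l) = s by rewrite /l; field.
  have e2 : l + (1 - l) = 1 by rewrite addrC subrK.
  by rewrite comb_id e1 e2 scale1r.
move: hs; rewrite ler_norml => /andP [hs1 hs2].
apply: conv_le => //; first by rewrite normrN.
  by rewrite /l divr_ge0 //; lra.
by rewrite /l ler_pdivrMr //; lra.
Qed.

Lemma L1 (b x0 : X) (c s t : R) : `|b + x0| <= c -> `|b - x0| <= c ->
  `|s| <= 1 -> `|t| <= 1 -> `|s *: b + t *: x0| <= c.
Proof.
move=> h1 h2 hs ht.
have p1 : `|s *: b + x0| <= c by exact: L1a.
have p2 : `|s *: b - x0| <= c by apply: L1a => //; rewrite opprK.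
rewrite addrC; apply: L1a => //; first by rewrite addrC.
by rewrite -opprB normrN.
Qed.
End Conv.
Arguments conv_le {R X}.
Arguments comb_id {R X}.
Arguments L1a {R X}.
Arguments L1 {R X}.

Lemma zid1 (V : zmodType) (u v w : V) : (v + w) + (u - v) = u + w.
Proof. by rewrite addrC addrA subrK addrC. Qed.

Lemma zid2 (V : zmodType) (u v b w : V) : (b + w) + (u - v) + (v - b) = u + w.
Proof. by rewrite -addrA (addrA (u - v)) subrK addrC addrA subrK addrC. Qed.

Lemma zid3 (V : zmodType) (a b c : V) : a - c = (a - b) + (b - c).
Proof. by rewrite addrA subrK. Qed.

Section Approx.
Variable R : realType.
Variables X Y : normedModType R.
Implicit Types phi psi : Y -> R.

Lemma approx_step (T : (Y -> R) -> X) n (xs : 'I_n -> X) (ys : 'I_n -> Y) phi (d : R) :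
  Dn phi -> 0 < d -> bdd_op T ->
  opnorm (fun phi => T phi - \sum_(i < n) phi (ys i) *: xs i) < d ->
  exists q : seq rat, `|T phi - \sum_(i < n) ratr (nth 0 q i) *: xs i| <= 2 * d.
Proof.
move=> Dphi dpos bT hop.
have [B HB] := bdd_bound bT.
have h1 : `|T phi - \sum_(i < n) phi (ys i) *: xs i| <=
    opnorm (fun phi => T phi - \sum_(i < n) phi (ys i) *: xs i).
  apply: (opnorm_ub _ (B + \sum_(i < n) `|ys i| * `|xs i|)) => // psi Dpsi.
  apply: le_trans (ler_normB _ _) _.
  apply: lerD; first exact: HB.
  apply: le_trans (ler_norm_sum _ _ _) _.
  apply: ler_sum => i _; rewrite normrZ; apply: ler_wpM2r => //.
  have [Dp d1] := Dpsi; apply: le_trans (dual_bound Dp _) _.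
  by rewrite ler_piMl // dnorm_ge0.
pose S := \sum_(i < n) `|xs i|.
have S0 : 0 <= S by apply: sumr_ge0.
pose e := d / (S + 1).
have epos : 0 < e by rewrite /e divr_gt0 //; lra.
have /choice [qf Hq] : forall i : 'I_n, exists q : rat, `|phi (ys i) - ratr q| < e.
  move=> i; have [|q] := @rat_in_itvoo R (phi (ys i) - e) (phi (ys i) + e); first lra.
  rewrite in_itv /= => /andP [h h']; exists q.
  by rewrite ltr_norml; apply/andP; split; lra.
exists [seq qf i | i <- enum 'I_n].
have Eq (i : 'I_n) : nth 0 [seq qf i | i <- enum 'I_n] i = qf i.
  by rewrite (nth_map i) ?size_enum_ord ?ltn_ord // nth_ord_enum.
have h2 : `|\sum_(i < n) phi (ys i) *: xs i -
            \sum_(i < n) ratr (nth 0 [seq qf i | i <- enum 'I_n] i) *: xs i| <= d.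
  rewrite -sumrB.
  apply: le_trans (ler_norm_sum _ _ _) _.
  apply: (@le_trans _ _ (\sum_(i < n) e * `|xs i|)).
    apply: ler_sum => i _; rewrite -scalerBl normrZ Eq.
    by apply: ler_wpM2r => //; exact: ltW.
  rewrite -mulr_sumr /e mulrAC ler_pdivrMr; last lra.
  by rewrite mulrDr mulr1 lerDl ltW.
set F := \sum_(i < n) phi (ys i) *: xs i in h1 h2 *.
set v := \sum_(i < n) _ *: xs i in h2 *.
have -> : T phi - v = (T phi - F) + (F - v) by exact: zid3.
apply: le_trans (ler_normD _ _) _; lra.
Qed.

Lemma final_step (u v b x0 : X) (c t d : R) : `|u| <= 1 -> `|b| = 1 ->
  v = `|v| *: b -> `|u - v| <= d ->
  `|b + x0| <= c -> `|b - x0| <= c -> `|t| <= 1 -> `|u + t *: x0| <= c + 2 * d.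
Proof.
move=> hu hb hv huv h1 h2 ht.
have d0 : 0 <= d by apply: le_trans huv.
have [v1|v1] := leP `|v| 1.
  have hw : `|v + t *: x0| <= c.
    by rewrite {1}hv; apply: L1 => //; rewrite ger0_norm.
  have -> : u + t *: x0 = (v + t *: x0) + (u - v) by rewrite zid1.
  apply: le_trans (ler_normD _ _) _; lra.
have hw : `|b + t *: x0| <= c.
  by rewrite -{1}(scale1r b); apply: L1 => //; rewrite normr1.
have hvb : `|v - b| = `|v| - 1.
  have -> : v - b = (`|v| - 1) *: b by rewrite {1}hv scalerBl scale1r.
  by rewrite normrZ hb mulr1 ger0_norm // subr_ge0 ltW.
have hvu : `|v| <= `|u| + `|u - v|.
  have e : u + (v - u) = v by rewrite addrC subrK.
  by have := ler_normD u (v - u); rewrite e distrC.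
have -> : u + t *: x0 = (b + t *: x0) + (u - v) + (v - b) by rewrite zid2.
apply: le_trans (ler_normD _ _) _.
apply: le_trans (lerD (ler_normD _ _) (lexx _)) _.
rewrite hvb; lra.
Qed.
End Approx.
Arguments approx_step {R X Y}.
Arguments final_step {R X}.

Section Core.
Variable R : realType.
Variables X Y : normedModType R.

Lemma unit_norm {V : normedModType R} {v : V} : v != 0 -> `| `|v|^-1 *: v| = 1.
Proof. by move=> vn; rewrite normrZ normfV normr_id mulVf // normr_eq0. Qed.

Lemma core (K : Type) (c : R) :
  1 <= c -> ~ countable [set: K] -> (exists x : X, x != 0) -> (exists y : Y, y != 0) ->
  (forall B : set X, (forall x, B x -> `|x| = 1) -> card_lt_type B K ->
     exists x0 : X, `|x0| = 1 /\ forall b, B b -> `|b + x0| <= c /\ `|b - x0| <= c) ->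
  forall A : set ((Y -> R) -> X), A `<=` @inj_tensor R X Y ->
    (forall T, A T -> opnorm T = 1) -> card_lt_type A K ->
  exists y, @inj_tensor R X Y y /\ opnorm y = 1 /\
    forall T, A T -> opnorm (T + y) <= c /\ opnorm (T - y) <= c.
Proof.
move=> c1 Kunc [x x0n] [yy yyn] hX A Asub Anorm Acard.
pose x1 := `|x|^-1 *: x; have nx1 : `|x1| = 1 := unit_norm x0n.
pose y0 := `|yy|^-1 *: yy; have ny0 : `|y0| = 1 := unit_norm yyn.
have [psi [psil [psin psiy0]]] := hahn_banach y0.
rewrite ny0 in psiy0.
have psi0 : psi 0 = 0.
  have := psil 1 0 0; rewrite scale1r addr0 mul1r => E.
  by apply: (@addrI _ (psi 0)); rewrite addr0 -E.
have psiN z : psi (- z) = - psi z.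
  by have := psil (-1) z 0; rewrite scaleN1r addr0 psi0 addr0 mulN1r.
have psiabs z : `|psi z| <= `|z|.
  rewrite ler_norml; have := psin (- z); rewrite psiN normrN => h.
  by apply/andP; split; [lra|exact: psin].
have Dpsi : Dn psi.
  split; first by split => //; exists 1 => z; rewrite mul1r.
  apply: ge_sup; first by exists `|psi 0|, 0; rewrite /= ?normr0 ?ler01.
  by move=> _ [z hz <-]; exact: le_trans (psiabs z) hz.
have /choice [apx Happx] : forall Tk : ((Y -> R) -> X) * nat,
  exists s : {n : nat & ('I_n -> X) * ('I_n -> Y)},
    @inj_tensor R X Y Tk.1 ->
    opnorm (fun phi => Tk.1 phi - \sum_(i < projT1 s) phi ((projT2 s).2 i) *: (projT2 s).1 i)
      < (Tk.2.+1%:R)^-1.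
  move=> [T k]; have [/= [bT HT]|nT] := pselect (@inj_tensor R X Y T).
    have [|n [xs [ys H]]] := HT ((k.+1%:R)^-1); first by rewrite invr_gt0.
    by exists (existT _ n (xs, ys)).
  by exists (existT _ 0%N ((fun _ => 0), (fun _ => 0))).
pose vec (T : (Y -> R) -> X) (k : nat) (q : seq rat) : X :=
  \sum_(i < projT1 (apx (T, k))) ratr (nth 0 q i) *: (projT2 (apx (T, k))).1 i.
pose gg T k q : X := if vec T k q == 0 then x1 else `|vec T k q|^-1 *: vec T k q.
have ggn T k q : `|gg T k q| = 1.
  by rewrite /gg; case: eqP => // /eqP; exact: unit_norm.
have ggv T k q : vec T k q = `|vec T k q| *: gg T k q.
  rewrite /gg; case: eqP => [->|/eqP vn]; first by rewrite normr0 scale0r.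
  by rewrite scalerA mulfV ?normr_eq0 // scale1r.
pose G (p : ((Y -> R) -> X) * (nat * seq rat)) := gg p.1 p.2.1 p.2.2.
pose B := G @` (A `*` [set: nat * seq rat]).
have Bn : forall b, B b -> `|b| = 1 by move=> _ [p _ <-]; exact: ggn.
have Bcard : card_lt_type B K.
  apply: (@card_lt_le _ _ K (A `*` [set: nat]) B); last exact: card_lt_prod.
  apply: card_le_trans (card_image_le _ _) _.
  apply: (@cle_of_fun _ _ _ _ (fun p => (p.1, pickle p.2))).
    by move=> [T kq] [AT _].
  move=> [T kq] [T' kq'] _ _ /pair_equal_spec [/= -> /pick_inj ->] //.
have [x0 [nx0 hx0]] := hX B Bn Bcard.
pose y : (Y -> R) -> X := fun phi => if `[< dual phi >] then phi y0 *: x0 else 0.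
have yD phi : dual phi -> y phi = phi y0 *: x0.
  by move=> Dp; rewrite /y; case: asboolP.
have phiy0 phi : Dn phi -> `|phi y0| <= 1.
  by move=> [Dp d1]; apply: le_trans (dnorm_ub Dp _ _) d1; rewrite ny0.
have ybound phi : Dn phi -> `|y phi| <= 1.
  move=> Dp; rewrite yD; last by case: Dp.
  by rewrite normrZ nx0 mulr1; exact: phiy0.
have ybdd : bdd_op y.
  split; first by move=> phi nD; rewrite /y; case: asboolP.
  split.
    move=> a phi psi' Dp Dq; rewrite !yD //; last exact: dual_comb.
    by rewrite scalerDl scalerA.
  exists 1 => phi Dp; rewrite yD // normrZ nx0 mulr1 mul1r.
  by have := dual_bound Dp y0; rewrite ny0 mulr1.
have yT : inj_tensor y.
  split => // e epos; exists 1%N, (fun _ => x0), (fun _ => y0).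
  apply: le_lt_trans epos; apply: opnorm_le => phi [Dp _].
  by rewrite big_ord1 yD // subrr normr0.
have yn : opnorm y = 1.
  apply/le_anti/andP; split; first exact: opnorm_le.
  have := opnorm_ub y 1 ybound psi Dpsi.
  by rewrite yD ?normrZ ?psiy0 ?normr1 ?mul1r ?nx0 //; case: Dpsi.
have key T phi t : A T -> Dn phi -> `|t| <= 1 -> `|T phi + t *: x0| <= c.
  move=> AT Dp ht.
  have [bT _] := Asub T AT.
  have hu : `|T phi| <= 1.
    have [BB HB] := bdd_bound bT; rewrite -(Anorm T AT); exact: opnorm_ub HB phi Dp.
  apply/ler_addgt0Pr => e epos.
  pose d := e / 4.
  have dpos : 0 < d by rewrite /d divr_gt0.
  pose k := Num.trunc (d^-1).
  have hk : (k.+1%:R)^-1 < d.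
    rewrite -[d]invrK ltf_pV2 ?posrE ?invr_gt0 //; first exact: truncnS_gt.
  have hop := Happx (T, k) (Asub T AT).
  have [q hq] := approx_step T _ _ _ phi d Dp dpos bT (lt_trans hop hk).
  have Bb : B (gg T k q) by exists (T, (k, q)).
  have [hb1 hb2] := hx0 _ Bb.
  have := final_step (T phi) (vec T k q) (gg T k q) x0 c t (2 * d) hu (ggn T k q)
    (ggv T k q) hq hb1 hb2 ht.
  rewrite /d => H; lra.
exists y; split => //; split => // T AT; split.
  apply: opnorm_le => phi Dp.
  have -> : (T + y) phi = T phi + y phi by [].
  rewrite yD; last by case: Dp.
  by apply: key => //; exact: phiy0.
apply: opnorm_le => phi Dp.
have -> : (T - y) phi = T phi - y phi by [].
rewrite yD; last by case: Dp.
by rewrite -scaleNr; apply: key => //; rewrite normrN; exact: phiy0.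
Qed.
End Core.

Theorem corollary4p7 (R : realType) (K : Type)
  (X Y : completeNormedModType R) :
  ~ countable [set: K] ->
  (exists x : X, x != 0) -> (exists y : Y, y != 0) ->
  (ASQ_lt [set: X] (fun x => `|x|) K ->
     ASQ_lt (@inj_tensor R X Y) (@opnorm R X Y) K) /\
  (SQ_lt [set: X] (fun x => `|x|) K ->
     SQ_lt (@inj_tensor R X Y) (@opnorm R X Y) K).
Proof.
move=> Kunc Xn Yn; split.
- move=> hX A Asub Anorm Acard e epos.
  have [|B Bn Bc|y [yT [yn H]]] :=
    @core R X Y K (1 + e) _ Kunc Xn Yn _ A Asub Anorm Acard.
  + by rewrite lerDl ltW.
  + have [x0 [_ [nx0 H]]] := hX B (fun _ _ => I) Bn Bc e epos.
    by exists x0; split.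
  + by exists y; split => //; split.
- move=> hX A Asub Anorm Acard.
  have [|B Bn Bc|y [yT [yn H]]] :=
    @core R X Y K 1 _ Kunc Xn Yn _ A Asub Anorm Acard => //.
  + have [x0 [_ [nx0 H]]] := hX B (fun _ _ => I) Bn Bc.
    by exists x0; split.
  + by exists y; split => //; split.
Qed.
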